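(* Let $0<p\leq1/2$ and $\ell\geq0$, and let $H$ be a finite bipartite graph with bipartition $X\cup Y$ such that $d_H(x,x')\leq\ell$ for all distinct $x,x'\in X$. Let $A$ be a $p$-random subset of $Y$ and let $S=|X\setminus N_H(A)|$. Then for all $r\geq0$, \[ \mathbb{P}\big(S-\mathbb{E}[S]\geq r\big)\leq\exp\left(-\frac{r^2}{4p\,(e_H(X,Y)+\ell|X|^2)}\right). \]
   Context: A $p$-random subset includes each element independently with probability $p$. $d_H(x,x')=|N_H(x)\cap N_H(x')|$ is the codegree, $N_H(A)=\bigcup_{a\in A}N_H(a)$, and $e_H(X,Y)$ is the number of edges of $H$ between $X$ and $Y$. *)

(* Defs.v *)
From HB Require Import structures.
From mathcomp Require Import all_boot all_order all_algebra.
From mathcomp Require Import reals.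
From mathcomp.analysis Require Import sequences exp.
Set Implicit Arguments. Unset Strict Implicit. Unset Printing Implicit Defensive.
Import Order.TTheory GRing.Theory Num.Theory.
Local Open Scope ring_scope.

(* codegree d_H(x,x') = |N_H(x) ∩ N_H(x')| *)
Definition codeg (X Y : finType) (adj : X -> Y -> bool) (x x' : X) : nat :=
  #|[set y | adj x y && adj x' y]|.

Definition nedges (X Y : finType) (adj : X -> Y -> bool) : nat :=
  #|[set xy : X * Y | adj xy.1 xy.2]|.

Definition nbhd (X Y : finType) (adj : X -> Y -> bool) (A : {set Y}) : {set X} :=
  [set x | [exists y in A, adj x y]].

Definition Sval (X Y : finType) (adj : X -> Y -> bool) (A : {set Y}) : nat :=
  #|~: nbhd adj A|.

Definition prand (R : realType) (Y : finType) (p : R) (A : {set Y}) : R :=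
  p ^+ #|A| * (1 - p) ^+ #|~: A|.

Definition ES (R : realType) (X Y : finType) (adj : X -> Y -> bool) (p : R) : R :=
  \sum_(A : {set Y}) prand p A * (Sval adj A)%:R.

Definition upper_tail (R : realType) (X Y : finType) (adj : X -> Y -> bool)
  (p r : R) : R :=
  \sum_(A : {set Y} | (Sval adj A)%:R - ES adj p >= r) prand p A.

(* Main.v *)
Require Import Defs.
From HB Require Import structures.
From mathcomp Require Import all_boot all_order all_algebra.
From mathcomp Require Import reals.
From mathcomp.analysis Require Import sequences exp.
From mathcomp Require Import ring lra.
Set Implicit Arguments. Unset Strict Implicit. Unset Printing Implicit Defensive.
Import Order.TTheory GRing.Theory Num.Theory.
Local Open Scope ring_scope.

Definition W (R : realType) (Y : finType) (p : R) (U A : {set Y}) : R :=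
  p ^+ #|A| * (1 - p) ^+ #|U :\: A|.
Definition Ex (R : realType) (Y : finType) (p : R) (U : {set Y})
  (g : {set Y} -> R) : R := \sum_(A : {set Y} | A \subset U) W p U A * g A.

Lemma split_sum (R : realType) (Y : finType) (U : {set Y}) y (F : {set Y} -> R) :
  y \in U -> \sum_(A : {set Y} | A \subset U) F A = \sum_(A : {set Y} | A \subset U :\ y) (F (y |: A) + F A).
Proof.
move=> yU; rewrite (bigID (fun A : {set Y} => y \in A)) big_split /=.
congr (_ + _); last by apply: eq_bigl => A; rewrite subsetD1.
rewrite (reindex_onto (fun A => y |: A) (fun A => A :\ y)) /=; last first.
  by move=> A /andP [_ yA]; rewrite setD1K.
apply: eq_bigl => A; rewrite subsetD1 setU11 andbT subUset sub1set yU /=.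
case: (boolP (y \in A)) => yA /=.
  rewrite andbF; apply/negbTE/negP => /andP [_ /eqP E].
  by move: yA; rewrite -E !inE eqxx.
by rewrite setU1K // eqxx.
Qed.

Lemma W_in1 (R : realType) (Y : finType) (p : R) (U A : {set Y}) y :
  y \in U -> A \subset U :\ y -> W p U (y |: A) = p * W p (U :\ y) A.
Proof.
move=> yU; rewrite subsetD1 => /andP [_ yA].
rewrite /W cardsU1 yA add1n exprS -mulrA; congr (_ * (_ * _)).
by rewrite setDDl.
Qed.

Lemma W_in0 (R : realType) (Y : finType) (p : R) (U A : {set Y}) y :
  y \in U -> A \subset U :\ y -> W p U A = (1 - p) * W p (U :\ y) A.
Proof.
move=> yU; rewrite subsetD1 => /andP [_ yA].
rewrite /W (cardsD1 y (U :\: A)) inE yA yU add1n exprS mulrCA; congr (_ * (_ * _)).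
by rewrite !setDDl setUC.
Qed.

Lemma Ex_split (R : realType) (Y : finType) (p : R) (U : {set Y}) y g :
  y \in U -> Ex p U g = p * Ex p (U :\ y) (fun A => g (y |: A)) + (1 - p) * Ex p (U :\ y) g.
Proof.
move=> yU; rewrite /Ex (split_sum _ yU) big_split /= !mulr_sumr.
congr (_ + _); apply: eq_bigr => A hA.
  by rewrite (W_in1 _ yU hA) mulrA.
by rewrite (W_in0 _ yU hA) /W; ring.
Qed.

Lemma Ex0 (R : realType) (Y : finType) (p : R) g : Ex p (set0 : {set Y}) g = g set0.
Proof.
rewrite /Ex (eq_bigl (fun A => A == set0)); last by move=> A; rewrite subset0.
by rewrite big_pred1_eq /W cards0 setD0 cards0 !expr0 mul1r mul1r.
Qed.

Lemma Ex_ext (R : realType) (Y : finType) (p : R) (U : {set Y}) (g h : {set Y} -> R) :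
  (forall A : {set Y}, A \subset U -> g A = h A) -> Ex p U g = Ex p U h.
Proof. by move=> e; apply: eq_bigr => A hA; rewrite e. Qed.

Lemma Ex_scale (R : realType) (Y : finType) (p : R) (U : {set Y}) (g : {set Y} -> R) c :
  Ex p U (fun A => c * g A) = c * Ex p U g.
Proof. by rewrite /Ex mulr_sumr; apply: eq_bigr => A _; rewrite mulrCA. Qed.

Lemma Ex_sub (R : realType) (Y : finType) (p : R) (U : {set Y}) (g h : {set Y} -> R) :
  Ex p U (fun A => g A - h A) = Ex p U g - Ex p U h.
Proof. by rewrite /Ex -sumrB; apply: eq_bigr => A _; rewrite mulrBr. Qed.

Lemma W_ge0 (R : realType) (Y : finType) (p : R) (U A : {set Y}) :
  0 <= p -> p <= 1 -> 0 <= W p U A.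
Proof. by move=> p0 p1; rewrite /W mulr_ge0 // exprn_ge0 // subr_ge0. Qed.

Lemma Ex_le (R : realType) (Y : finType) (p : R) (U : {set Y}) (g h : {set Y} -> R) :
  0 <= p -> p <= 1 ->
  (forall A : {set Y}, A \subset U -> g A <= h A) -> Ex p U g <= Ex p U h.
Proof.
move=> p0 p1 e; apply: ler_sum => A hA; by rewrite ler_wpM2l ?W_ge0 ?e.
Qed.

Lemma Ex1 (R : realType) (Y : finType) (p : R) n (U : {set Y}) :
  #|U| = n -> Ex p U (fun _ => 1) = 1.
Proof.
elim: n U => [|n IH] U hU.
  by move/eqP: hU; rewrite cards_eq0 => /eqP ->; rewrite Ex0.
have [y yU] : exists y, y \in U by apply/set0Pn; rewrite -card_gt0 hU.
rewrite (Ex_split _ _ yU) !IH; first by ring.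
all: by move: hU; rewrite (cardsD1 y) yU add1n => -[].
Qed.

Lemma Ex_const (R : realType) (Y : finType) (p : R) (U : {set Y}) c :
  Ex p U (fun _ => c) = c.
Proof.
by rewrite -[c]mulr1 (Ex_scale p U (fun _ => 1) c) (Ex1 p (erefl #|U|)) !mulr1.
Qed.
Lemma twopt (R : realType) (p t : R) : 0 <= p -> 0 <= t ->
  p * expR (- ((1 - p) * t)) + (1 - p) * expR (p * t) <= expR (p * t ^+ 2).
Proof.
move=> p0 t0.
have e1 : expR (- ((1 - p) * t)) = expR (p * t) * expR (- t).
  by rewrite -expRD; congr expR; ring.
have e2 : expR (p * t ^+ 2) = expR (p * t) * expR (p * (t ^+ 2 - t)).
  by rewrite -expRD; congr expR; ring.
have -> : p * expR (- ((1 - p) * t)) + (1 - p) * expR (p * t) =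
  expR (p * t) * (p * expR (- t) + (1 - p)) by rewrite e1; ring.
rewrite e2 ler_wpM2l ?expR_ge0 //.
have hN : expR (- t) <= 1 - t + t ^+ 2.
  have h1 : 0 < 1 + t by lra.
  have h2 : 1 + t <= expR t := expR_ge1Dx t.
  rewrite expRN.
  apply: (@le_trans _ _ ((1 + t)^-1)); first by rewrite lef_pV2 ?posrE ?expR_gt0.
  rewrite -[X in X <= _]mul1r ler_pdivrMr //; nra.
apply: (@le_trans _ _ (1 + p * (t ^+ 2 - t))); last exact: expR_ge1Dx.
have : p * expR (- t) <= p * (1 - t + t ^+ 2) by rewrite ler_wpM2l.
lra.
Qed.
Lemma setU1D1 (Y : finType) (A : {set Y}) y y' : y != y' ->
  y |: (A :\ y') = (y |: A) :\ y'.
Proof.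
move=> ne; apply/setP => z; rewrite !inE.
case: (eqVneq z y) => [->|] //=; by rewrite ne.
Qed.

Lemma mgf (R : realType) (Y : finType) (p lam : R) (c : Y -> R) n :
  0 <= p -> p <= 1 -> 0 <= lam ->
  forall (U : {set Y}) (g : {set Y} -> R), #|U| = n ->
  (forall (A : {set Y}) y, y \in U -> 0 <= g (A :\ y) - g (y |: A) <= c y) ->
  Ex p U (fun A => expR (lam * (g A - Ex p U g))) <=
    expR (p * lam ^+ 2 * \sum_(y in U) c y ^+ 2).
Proof.
move=> p0 p1 l0; elim: n => [|n IH] U g hU hg.
  move/eqP: hU; rewrite cards_eq0 => /eqP ->; rewrite !Ex0 subrr mulr0 big_set0 mulr0.
  by [].
have [y yU] : exists y, y \in U by apply/set0Pn; rewrite -card_gt0 hU.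
have hU' : #|U :\ y| = n by move: hU; rewrite (cardsD1 y) yU add1n => -[].
set U' := U :\ y in hU' *.
set g1 := fun A => g (y |: A).
set m1 := Ex p U' g1.
set m0 := Ex p U' g.
set m := Ex p U g.
have hm : m = p * m1 + (1 - p) * m0 by rewrite /m (Ex_split _ _ yU).
set d := m0 - m1.
have hd : 0 <= d <= c y.
  have -> : d = Ex p U' (fun A => g A - g1 A) by rewrite Ex_sub.
  have hA : forall A : {set Y}, A \subset U' -> 0 <= g A - g1 A <= c y.
    move=> A; rewrite subsetD1 => /andP [_ yA].
    have -> : g A = g (A :\ y).
      congr g; apply/setP => z; rewrite !inE.
      by case: (eqVneq z y) => [->|] //=; rewrite (negbTE yA).
    exact: hg.
  apply/andP; split.
    rewrite -[0](Ex_const p U'); apply: Ex_le => // A hA'.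
    by case/andP: (hA A hA').
  rewrite -[c y](Ex_const p U'); apply: Ex_le => // A hA'.
  by case/andP: (hA A hA').
set K := expR (p * lam ^+ 2 * \sum_(y0 in U') c y0 ^+ 2).
have IH1 : Ex p U' (fun A => expR (lam * (g1 A - m1))) <= K.
  apply: IH => // A y' y'U'.
  have ne : y != y' by move: y'U'; rewrite !inE => /andP [/eqP ? _]; apply/eqP => E; subst.
  rewrite /g1 setU1D1 // setUCA; apply: hg.
  by move: y'U'; rewrite !inE => /andP [].
have IH0 : Ex p U' (fun A => expR (lam * (g A - m0))) <= K.
  apply: IH => // A y' y'U'; apply: hg.
  by move: y'U'; rewrite !inE => /andP [].
rewrite (Ex_split _ _ yU).
rewrite (@Ex_ext _ _ p U' _ (fun A => expR (lam * (m1 - m)) * expR (lam * (g1 A - m1)))); last first.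
  by move=> A _; rewrite -expRD; congr expR; rewrite /g1; ring.
rewrite (@Ex_ext _ _ p U' (fun A => expR (lam * (g A - m)))
   (fun A => expR (lam * (m0 - m)) * expR (lam * (g A - m0)))); last first.
  by move=> A _; rewrite -expRD; congr expR; ring.
rewrite !Ex_scale.
have p1' : 0 <= 1 - p by lra.
apply: (@le_trans _ _ ((p * expR (lam * (m1 - m)) + (1 - p) * expR (lam * (m0 - m))) * K)).
  rewrite [X in _ <= X]mulrDl -!mulrA.
  by apply: lerD; rewrite ler_wpM2l // ler_wpM2l // expR_ge0.
have e1 : lam * (m1 - m) = - ((1 - p) * (lam * d)) by rewrite hm /d; ring.
have e2 : lam * (m0 - m) = p * (lam * d) by rewrite hm /d; ring.
rewrite e1 e2.
have hld : 0 <= lam * d by case/andP: hd => d0 _; rewrite mulr_ge0.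
apply: (@le_trans _ _ (expR (p * (lam * d) ^+ 2) * K)).
  by rewrite ler_wpM2r ?expR_ge0 // twopt.
have eK : expR (p * lam ^+ 2 * \sum_(y0 in U) c y0 ^+ 2) =
    expR (p * lam ^+ 2 * c y ^+ 2) * K.
  rewrite /K -expRD (bigD1 y) //= mulrDr; congr (expR (_ + _)); congr (_ * _).
  by apply: eq_bigl => z; rewrite /U' !inE andbC.
rewrite eK ler_wpM2r ?expR_ge0 // ler_expR.
rewrite exprMn -mulrA ler_wpM2l // ler_wpM2l ?exprn_ge0 //.
case/andP: hd => d0 dc; rewrite ler_sqr ?nnegrE //; exact: le_trans dc.
Qed.
Lemma cardR (R : realType) (T : finType) (P : pred T) :
  (#|[set x | P x]|)%:R = \sum_(x : T) (P x)%:R :> R.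
Proof.
rewrite -sum1_card natr_sum big_mkcond /=; apply: eq_bigr => x _.
by rewrite inE; case: (P x).
Qed.

Lemma sumdeg (R : realType) (X Y : finType) (adj : X -> Y -> bool) (l : R) :
  0 <= l -> (forall x x' : X, x != x' -> (codeg adj x x')%:R <= l) ->
  \sum_(y : Y) (#|[set x | adj x y]|%:R) ^+ 2 <=
    (nedges adj)%:R + l * (#|X|%:R) ^+ 2 :> R.
Proof.
move=> l0 hcod.
have e1 : \sum_(y : Y) (#|[set x | adj x y]|%:R) ^+ 2 =
    \sum_(x : X) \sum_(x' : X) (codeg adj x x')%:R :> R.
  rewrite (eq_bigr (fun y => \sum_(x : X) \sum_(x' : X) (adj x y)%:R * (adj x' y)%:R)); last first.
    move=> y _; rewrite cardR expr2 mulr_suml; apply: eq_bigr => x _.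
    by rewrite mulr_sumr.
  rewrite exchange_big /=; apply: eq_bigr => x _.
  rewrite exchange_big /=; apply: eq_bigr => x' _.
  rewrite /codeg cardR; apply: eq_bigr => y _.
  by case: (adj x y); case: (adj x' y); rewrite /= ?mul0r ?mul1r ?mulr0.
have e2 : (nedges adj)%:R = \sum_(x : X) (codeg adj x x)%:R :> R.
  rewrite /nedges cardR -(pair_big xpredT xpredT (fun x y => (adj x y)%:R)) /=.
  apply: eq_bigr => x _; rewrite /codeg cardR; apply: eq_bigr => y _.
  by rewrite andbb.
rewrite e1 e2.
have -> : l * (#|X|%:R) ^+ 2 = \sum_(x : X) (l * #|X|%:R) :> R.
  by rewrite sumr_const -(mulr_natr (l * _)) expr2 mulrA.
rewrite -big_split /=; apply: ler_sum => x _.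
rewrite (bigD1 x) //= lerD2l.
apply: (@le_trans _ _ (\sum_(x' | x' != x) l)).
  by apply: ler_sum => x' hx; apply: hcod; rewrite eq_sym.
apply: (@le_trans _ _ (\sum_(x' : X) l)).
  by rewrite [X in _ <= X](bigD1 x) //= lerDr.
by rewrite sumr_const -(mulr_natr l).
Qed.
Lemma Sdiff (X Y : finType) (adj : X -> Y -> bool) (A : {set Y}) y (R : realType) :
  0 <= ((Sval adj (A :\ y))%:R - (Sval adj (y |: A))%:R : R) <= (#|[set x | adj x y]|)%:R.
Proof.
have sub1 : ~: nbhd adj (y |: A) \subset ~: nbhd adj (A :\ y).
  rewrite setCS; apply/subsetP => x; rewrite !inE => /existsP [z /andP [hz hx]].
  apply/existsP; exists z; rewrite hx andbT; move: hz; rewrite !inE => /andP [_ ->].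
  by rewrite orbT.
have sub2 : ~: nbhd adj (A :\ y) \subset ~: nbhd adj (y |: A) :|: [set x | adj x y].
  apply/subsetP => u; rewrite !inE => hx.
  case: (boolP (adj u y)) => hxy; rewrite ?orbT // orbF.
  apply/negP => /existsP [z /andP [hz hxz]]; move/negP: hx; apply.
  apply/existsP; exists z; move: hz; rewrite !inE => /orP [/eqP e|->].
    by subst; move: hxy; rewrite hxz.
  rewrite hxz !andbT; apply/negP => /eqP e; subst; by move: hxy; rewrite hxz.
apply/andP; split.
  by rewrite subr_ge0 ler_nat /Sval subset_leq_card.
rewrite lerBlDr -natrD ler_nat /Sval addnC.
apply: (leq_trans (subset_leq_card sub2)).
by rewrite cardsU leq_subr.
Qed.

Unset Implicit Arguments.

Theorem lemma3p4 (R : realType) (X Y : finType) (adj : X -> Y -> bool)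
  (p l : R) (hp0 : 0 < p) (hp1 : p <= 1 / 2) (hl : 0 <= l)
  (hcod : forall x x' : X, x != x' -> (codeg adj x x')%:R <= l)
  (r : R) (hr : 0 <= r) :
  upper_tail adj p r <=
    expR (- (r ^+ 2 / (4 * p * ((nedges adj)%:R + l * (#|X|%:R) ^+ 2)))).
Proof.
set V := (nedges adj)%:R + l * (#|X|%:R) ^+ 2.
have V0 : 0 <= V by rewrite addr_ge0 // mulr_ge0 // exprn_ge0.
have p0 : 0 <= p by lra.
have p1 : p <= 1 by lra.
set lam := r / (2 * p * V).
have l0 : 0 <= lam by rewrite divr_ge0 // mulr_ge0 // mulr_ge0.
set g := fun A : {set Y} => (Sval adj A)%:R : R.
set c := fun y : Y => (#|[set x | adj x y]|)%:R : R.
have hEx : forall h, Ex p setT h = \sum_(A : {set Y}) prand p A * h A.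
  move=> h; rewrite /Ex; apply: eq_big => A; first by rewrite subsetT.
  by move=> _; rewrite /W /prand setTD.
have hES : ES adj p = Ex p setT g by rewrite hEx.
have M := @mgf R Y p lam c #|[set: Y]| p0 p1 l0 setT g (erefl _)
  (fun A y _ => Sdiff adj A y R).
apply: (@le_trans _ _ (expR (- (lam * r)) *
   Ex p setT (fun A => expR (lam * (g A - Ex p setT g))))).
  rewrite /upper_tail hEx mulr_sumr big_mkcond /=; apply: ler_sum => A _.
  have pA : 0 <= prand p A by rewrite /prand mulr_ge0 // exprn_ge0 // subr_ge0.
  rewrite mulrCA -expRD.
  case: ifP => h.
    rewrite -[X in X <= _]mulr1 ler_wpM2l //.
    apply: le_trans (expR_ge1Dx _); rewrite lerDl.
    rewrite -hES /g; have : r <= (Sval adj A)%:R - ES adj p := h.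
    move=> hh; have : 0 <= (Sval adj A)%:R - ES adj p - r by lra.
    move=> hh'; have := mulr_ge0 l0 hh'; lra.
  by rewrite mulr_ge0 // expR_ge0.
apply: (@le_trans _ _ (expR (- (lam * r)) * expR (p * lam ^+ 2 * \sum_(y in [set: Y]) c y ^+ 2))).
  by rewrite ler_wpM2l ?expR_ge0.
rewrite -expRD ler_expR.
have hs : \sum_(y in [set: Y]) c y ^+ 2 <= V.
  apply: le_trans (sumdeg hl hcod); rewrite le_eqVlt; apply/orP; left; apply/eqP.
  by apply: eq_bigl => y; rewrite inE.
have hpl : 0 <= p * lam ^+ 2 by rewrite mulr_ge0 // exprn_ge0.
apply: (@le_trans _ _ (- (lam * r) + p * lam ^+ 2 * V)).
  by rewrite lerD2l ler_wpM2l.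
case: (eqVneq V 0) => [V0'|Vn0].
  by rewrite /lam V0' !mulr0 invr0 !(mulr0, mul0r, oppr0, addr0).
have pn0 : p != 0 by rewrite gt_eqF.
suff -> : - (lam * r) + p * lam ^+ 2 * V = - (r ^+ 2 / (4 * p * V)) by [].
by rewrite /lam; field; rewrite ?pn0 ?Vn0.
Qed.
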